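(* There exist two tree-child phylogenetic networks $N_{11}$ and $N_{12}$ on $S=\{1,2,3,4,5\}$ such that $N_{11}\not\cong N_{12}$, $\theta_{AB}(N_{11})=\theta_{AB}(N_{12})$, $\Psi(N_{11})=\Psi(N_{12})$, and the set of reticulation scenarios $\{RS(v)\}$ of hybrid nodes is the same in both.
   Context: A DAG $N=(V,E)$ is labeled in a finite set $S$ if its leaves (out-degree 0) are bijectively labeled by $S$; leaves are identified with their labels. A tree node has in-degree at most 1; a hybrid node has in-degree greater than 1. Isomorphism ($\cong$) means isomorphism of directed graphs preserving leaf labels. A tree child of a node is a child that is a tree node. A tree-child phylogenetic network on $S$ is a rooted DAG labeled in $S$ in which every non-leaf node has at least one tree child, no tree node has out-degree 1, and every hybrid node has out-degree exactly 1. For a node $u$: $C(u)$ is the set of leaves descending from $u$; $A(u)$ the set of leaves $s$ such that every path from the root to $s$ contains $u$; $B(u)=C(u)\setminus A(u)$. For an arc $e=(u,v)$: $\theta(e)=(A(v),B(v),S\setminus C(v))$; $\theta_{AB}(e)$ is that triple with each leaf $s\in A(v)\cup B(v)$ weighted by the maximum number of hybrid nodes on a path from $v$ to $s$ (including $v,s$); $\theta_{AB}(N)=\{\theta_{AB}(e)\mid e\in E\}$. An arc is a tree arc if its head is a tree node and a network arc otherwise. $RS(v)=\{C(u)\mid u$ a parent of $v\}$ for a hybrid node $v$. $\Psi(e)=\theta_{AB}(e)$ for a tree arc and $\Psi(e)=(\theta(e),RS(v))$ for a network arc with head $v$; $\Psi(N)=\{\Psi(e)\mid e\in E\}$. *)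

(* Defs.v *)
From mathcomp Require Import all_boot.
Set Implicit Arguments. Unset Strict Implicit. Unset Printing Implicit Defensive.

(* A DAG with nodes of a finite type, arcs given by a (simple) relation, and a
   labelling function; only the labels of leaves matter. *)
Record net := Net { nV : finType; arc : rel nV; lab : nV -> nat }.

Section Defs.
Variable N : net.
Local Notation V := (nV N).
Local Notation E := (@arc N).

Definition inS (s : nat) : Prop := 1 <= s <= 5.

Definition indeg (v : V) : nat := #|[set u | E u v]|.
Definition outdeg (v : V) : nat := #|[set w | E v w]|.
Definition leaf (v : V) : bool := outdeg v == 0.
Definition tree_node (v : V) : bool := indeg v <= 1.
Definition hybrid (v : V) : bool := 1 < indeg v.

Definition is_root (r : V) : bool := (indeg r == 0) && [forall v, connect E r v].
Definition acyclic : Prop := forall u v, E u v -> ~~ connect E v u.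
Definition rooted_dag : Prop := acyclic /\ exists r, is_root r.

Definition labeled_in_S : Prop :=
  [/\ (forall x y, leaf x -> leaf y -> lab x = lab y -> x = y),
      (forall x, leaf x -> inS (lab x)) &
      (forall s, inS s -> exists x, leaf x /\ lab x = s)].

Definition tree_child_network : Prop :=
  [/\ rooted_dag, labeled_in_S,
      (forall v, ~~ leaf v -> exists w, E v w /\ tree_node w),
      (forall v, tree_node v -> outdeg v != 1) &
      (forall v, hybrid v -> outdeg v = 1)].

Definition Cset (u : V) (s : nat) : Prop :=
  exists x, [/\ leaf x, lab x = s & connect E u x].

Definition Aset (u : V) (s : nat) : Prop :=
  (exists x, leaf x /\ lab x = s) /\
  forall (r x : V) (p : seq V), is_root r -> leaf x -> lab x = s ->
    path E r p -> last r p = x -> u \in r :: p.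

Definition Bset (u : V) (s : nat) : Prop := Cset u s /\ ~ Aset u s.

Definition Cco (u : V) (s : nat) : Prop := inS s /\ ~ Cset u s.

Definition maxhyb (v : V) (s : nat) (n : nat) : Prop :=
  exists x, [/\ leaf x, lab x = s,
    (exists p, [/\ path E v p, last v p = x & count hybrid (v :: p) = n]) &
    (forall p, path E v p -> last v p = x -> count hybrid (v :: p) <= n)].

Definition parent (u v : V) : bool := E u v.
End Defs.

Definition same_set (P Q : nat -> Prop) : Prop := forall s, P s <-> Q s.

(* theta(e) for arcs with heads v1 (in N1) and v2 (in N2) coincide *)
Definition theta_eq (N1 N2 : net) (v1 : nV N1) (v2 : nV N2) : Prop :=
  [/\ same_set (Aset v1) (Aset v2), same_set (Bset v1) (Bset v2) &
      same_set (Cco v1) (Cco v2)].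

Definition thetaAB_eq (N1 N2 : net) (v1 : nV N1) (v2 : nV N2) : Prop :=
  theta_eq v1 v2 /\
  forall s, (Aset v1 s \/ Bset v1 s) -> forall n, maxhyb v1 s n <-> maxhyb v2 s n.

Definition RS_eq (N1 N2 : net) (v1 : nV N1) (v2 : nV N2) : Prop :=
  (forall u1 : nV N1, arc u1 v1 -> exists u2 : nV N2, arc u2 v2 /\ same_set (Cset u1) (Cset u2)) /\
  (forall u2 : nV N2, arc u2 v2 -> exists u1 : nV N1, arc u1 v1 /\ same_set (Cset u1) (Cset u2)).

(* Psi(e1) = Psi(e2): both tree arcs with equal theta_AB, or both network arcs
   with equal (theta, RS(head)) *)
Definition Psi_eq (N1 N2 : net) (v1 : nV N1) (v2 : nV N2) : Prop :=
  [/\ tree_node v1, tree_node v2 & thetaAB_eq v1 v2] \/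
  [/\ hybrid v1, hybrid v2, theta_eq v1 v2 & RS_eq v1 v2].

Definition thetaAB_net_eq (N1 N2 : net) : Prop :=
  (forall u1 v1 : nV N1, arc u1 v1 -> exists u2 v2 : nV N2, arc u2 v2 /\ thetaAB_eq v1 v2) /\
  (forall u2 v2 : nV N2, arc u2 v2 -> exists u1 v1 : nV N1, arc u1 v1 /\ thetaAB_eq v2 v1).

Definition Psi_net_eq (N1 N2 : net) : Prop :=
  (forall u1 v1 : nV N1, arc u1 v1 -> exists u2 v2 : nV N2, arc u2 v2 /\ Psi_eq v1 v2) /\
  (forall u2 v2 : nV N2, arc u2 v2 -> exists u1 v1 : nV N1, arc u1 v1 /\ Psi_eq v2 v1).

Definition RS_net_eq (N1 N2 : net) : Prop :=
  (forall v1 : nV N1, hybrid v1 -> exists v2 : nV N2, hybrid v2 /\ RS_eq v1 v2) /\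
  (forall v2 : nV N2, hybrid v2 -> exists v1 : nV N1, hybrid v1 /\ RS_eq v1 v2).

Definition isomorphic (N1 N2 : net) : Prop :=
  exists f : nV N1 -> nV N2, [/\ bijective f,
    (forall u w, arc (f u) (f w) = arc u w) &
    (forall x, leaf x -> lab (f x) = lab x)].

(* Main.v *)
Require Import Defs.
From mathcomp Require Import all_boot zify.
From Stdlib Require Import Lia.
Set Implicit Arguments. Unset Strict Implicit. Unset Printing Implicit Defensive.

Section Gen.
Variable N : net.
Local Notation V := (nV N).
Local Notation E := (@Defs.arc N).

Lemma leafE (x : V) : leaf x = [forall w, ~~ E x w].
Proof.
rewrite /leaf /outdeg cards_eq0; apply/eqP/forallP => [H w|H].
- apply/negP => Hw; have : w \in [set w | E x w] by rewrite inE.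
  by rewrite H inE.
- by apply/setP => w; rewrite inE in_set0; exact: negbTE (H w).
Qed.

Definition Cb (u : V) (s : nat) : bool :=
  [exists x, [&& leaf x, lab x == s & connect E u x]].

Lemma CsetP u s : Cset u s <-> Cb u s.
Proof.
split.
- by move=> [x [lx lb cx]]; apply/existsP; exists x; rewrite lx lb eqxx cx.
- by move=> /existsP [x /and3P [lx /eqP lb cx]]; exists x.
Qed.

Definition Eav (u : V) : rel V := fun a b => E a b && (b != u).

Lemma path_Eav u r p : path (Eav u) r p -> path E r p /\ u \notin p.
Proof.
elim: p r => [|w p IH] r //= /andP [/andP [Erw wu] pp].
have [H1 H2] := IH _ pp; split; first by rewrite Erw.
by rewrite in_cons negb_or eq_sym wu.
Qed.

Lemma path_Eav' u r p : path E r p -> u \notin p -> path (Eav u) r p.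
Proof.
elim: p r => [|w p IH] r //= /andP [Erw pp].
rewrite in_cons negb_or => /andP [uw up].
by rewrite /Eav Erw eq_sym uw IH.
Qed.

Definition Ab (u : V) (s : nat) : bool :=
  [exists x : V, leaf x && (lab x == s)] &&
  [forall r : V, is_root r ==> [forall x : V, (leaf x && (lab x == s)) ==>
     (u == r) || ~~ connect (Eav u) r x]].

Lemma AsetP u s : Aset u s <-> Ab u s.
Proof.
split.
- move=> [[x [lx ls]] H]; apply/andP; split.
    by apply/existsP; exists x; rewrite lx ls eqxx.
  apply/forallP => r; apply/implyP => Hr; apply/forallP => y.
  apply/implyP => /andP [ly /eqP lys].
  case: eqP => //= ur; apply/negP => /connectP [p pp ly'].
  have [pE up] := path_Eav pp.
  have := H r y p Hr ly lys pE (esym ly').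
  by rewrite in_cons (negbTE up) orbF => /eqP.
- move=> /andP [/existsP [x /andP [lx /eqP ls]] /forallP H]; split.
    by exists x.
  move=> r y p Hr ly lys pp lp.
  case: (boolP (u \in r :: p)) => // Hn.
  move: Hn; rewrite in_cons negb_or => /andP [ur up].
  have := implyP (H r) Hr => /forallP /(_ y).
  rewrite ly lys eqxx /= (negbTE ur) /= => /negP; case.
  apply/connectP; exists p; last by rewrite lp.
  exact: path_Eav'.
Qed.

Definition Bb (u : V) (s : nat) : bool := Cb u s && ~~ Ab u s.

Lemma BsetP u s : Bset u s <-> Bb u s.
Proof.
rewrite /Bset /Bb; split.
- by move=> [/CsetP -> H] /=; apply/negP => /AsetP.
- by move=> /andP [/CsetP H1 H2]; split => // /AsetP; apply/negP.
Qed.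

Definition Ccob (u : V) (s : nat) : bool := (1 <= s <= 5) && ~~ Cb u s.

Lemma CcoP u s : Cco u s <-> Ccob u s.
Proof.
rewrite /Cco /Ccob /inS; split.
- by move=> [-> H] /=; apply/negP => /CsetP.
- by move=> /andP [H1 H2]; split => // /CsetP; apply/negP.
Qed.

Definition rk (v : V) := #|[set w | connect E v w]|.

Lemma rk_lt (a b : V) : acyclic N -> E a b -> rk b < rk a.
Proof.
move=> Hac Eab; apply: proper_card; apply/properP; split.
- apply/subsetP => w; rewrite !inE => Hbw.
  exact: connect_trans (connect1 Eab) Hbw.
- exists a; rewrite !inE ?connect0 //; exact: Hac.
Qed.

Lemma path_size (Hac : acyclic N) v p : path E v p -> size p < rk v.
Proof.
elim: p v => [|w p IH] v /=.
- by move=> _; rewrite /rk card_gt0; apply/set0Pn; exists v; rewrite inE connect0.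
- move=> /andP [Evw pp]; have := IH _ pp; have := rk_lt Hac Evw; lia.
Qed.

Lemma path_size' (Hac : acyclic N) v p : path E v p -> size p <= #|V|.
Proof.
move=> pp; apply: ltnW; apply: leq_trans (path_size Hac pp) _.
exact: max_card.
Qed.

Fixpoint mh (f : nat) (v x : V) : nat :=
  let here := if v == x then (hybrid v).+1 else 0 in
  if f is f'.+1 then
    maxn here (\max_(w | E v w) (if mh f' w x is k.+1 then (k + hybrid v).+1 else 0))
  else here.

Lemma bigmax_ex (I : finType) (P : pred I) (F : I -> nat) m :
  \max_(i | P i) F i = m.+1 -> exists i, P i /\ F i = m.+1.
Proof.
elim/big_rec: _ => // i y Pi IH.
case: (leqP (F i) y) => h.
- exact: IH.
- by move=> <-; exists i.
Qed.

Lemma mh_complete f : forall v x p, path E v p -> last v p = x -> size p <= f ->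
  count (@hybrid N) (v :: p) < mh f v x.
Proof.
elim: f => [|f IH] v x [|w p] /=.
- by move=> _ <- _; rewrite eqxx addn0.
- by [].
- by move=> _ <- _; rewrite eqxx addn0 leq_max leqnn.
- move=> /andP [Evw pp] lx sz.
  have := IH w x p pp lx sz.
  rewrite /=. case E2: (mh f w x) => [//|k] Hk.
  apply: leq_trans (leq_maxr _ _).
  apply: leq_trans (leq_bigmax_cond _ Evw).
  rewrite E2; move: Hk; lia.
Qed.

Lemma mh_sound f : forall v x k, mh f v x = k.+1 ->
  exists p, [/\ path E v p, last v p = x & count (@hybrid N) (v :: p) = k].
Proof.
elim: f => [|f IH] v x k /=.
- by case: eqP => // <- [<-]; exists [::]; rewrite /= addn0.
- set h := (if v == x then _ else _).
  set B := \max_(w | _) _.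
  case: (leqP h B) => hB Hm.
  + have [w [Evw]] := bigmax_ex Hm.
    case E2: (mh f w x) => [|j] // [Hj].
    have [p [pp lp cp]] := IH _ _ _ E2.
    exists (w :: p); split => /=; [by rewrite Evw | done | move: cp Hj => /=; lia].
  + move: Hm; rewrite /h; case: eqP => // <- [<-].
    by exists [::]; rewrite /= addn0.
Qed.

Definition mhb (v : V) (s : nat) (n : nat) : bool :=
  [exists x, [&& leaf x, lab x == s & mh #|V| v x == n.+1]].

Lemma maxhybP (Hac : acyclic N) v s n : maxhyb v s n <-> mhb v s n.
Proof.
split.
- move=> [x [lx ls [p [pp lp cp]] Hall]].
  have := mh_complete pp lp (path_size' Hac pp).
  case E2: (mh _ v x) => [//|m] Hlt.
  have [q [qq lq cq]] := mh_sound E2.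
  have := Hall q qq lq; rewrite cq => Hmn.
  apply/existsP; exists x; rewrite lx ls eqxx /=; apply/eqP.
  rewrite E2; move: Hlt; rewrite cp; lia.
- move=> /existsP [x /and3P [lx /eqP ls /eqP H]].
  have [p [pp lp cp]] := mh_sound H.
  exists x; split => //; first by exists p.
  move=> q qq lq; have := mh_complete qq lq (path_size' Hac qq).
  by rewrite H.
Qed.

Definition labOK : bool := [forall x : V, leaf x ==> (1 <= lab x <= 5)].

Lemma noleaf_big (Hl : labOK) s : 5 < s -> [exists x : V, leaf x && (lab x == s)] = false.
Proof.
move=> hs; case: existsP => // -[x /andP [lx /eqP ls]].
move/forallP: Hl => /(_ x); rewrite lx /= ls; lia.
Qed.

Lemma Cb_big (Hl : labOK) u s : 5 < s -> Cb u s = false.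
Proof.
move=> hs; rewrite /Cb; case: existsP => // -[x /and3P [lx ls _]].
by move: (noleaf_big Hl hs) => /negbT /existsPn /(_ x); rewrite lx ls.
Qed.

Lemma Ab_big (Hl : labOK) u s : 5 < s -> Ab u s = false.
Proof. by move=> hs; rewrite /Ab noleaf_big. Qed.

Lemma Bb_big (Hl : labOK) u s : 5 < s -> Bb u s = false.
Proof. by move=> hs; rewrite /Bb Cb_big. Qed.

Lemma Ccob_big u s : 5 < s -> Ccob u s = false.
Proof. by rewrite /Ccob; lia. Qed.

End Gen.

Definition ssb (p q : nat -> bool) := all (fun s => p s == q s) (iota 0 6).

Lemma ss_of (P Q : nat -> Prop) (p q : nat -> bool) :
  (forall s, P s <-> p s) -> (forall s, Q s <-> q s) ->
  (forall s, 5 < s -> p s = false) -> (forall s, 5 < s -> q s = false) ->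
  ssb p q -> same_set P Q.
Proof.
move=> HP HQ Hp Hq /allP H s; rewrite HP HQ.
case: (ltnP 5 s) => hs; first by rewrite Hp ?Hq.
have : s \in iota 0 6 by rewrite mem_iota.
by move/H/eqP => ->.
Qed.

Section L.
Variable N : net.
Local Notation V := (nV N).
Local Notation E := (@Defs.arc N).
Variable els : seq V.
Hypothesis Hfull : forall x : V, x \in els.

Lemma allE (P : pred V) : all P els = [forall x, P x].
Proof. by apply/allP/forallP => H x; [exact: H | move=> _; exact: H]. Qed.

Lemma hasE (P : pred V) : has P els = [exists x, P x].
Proof. by apply/hasP/existsP => [[x _ Px]|[x Px]]; exists x. Qed.

Definition step (e : rel V) (l : seq V) : seq V :=
  undup (l ++ filter (fun w => has (fun u => e u w) l) els).
Definition reachS (e : rel V) (x : V) : seq V := iter (size els) (step e) [:: x].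
Definition connb (e : rel V) (x y : V) : bool := y \in reachS e x.
Definition closedS (e : rel V) (S : seq V) : bool :=
  all (fun a => (a \in S) ==> all (fun b => e a b ==> (b \in S)) els) els.
Definition closedb (e : rel V) (x : V) : bool := closedS e (reachS e x).

Lemma reach_sound e x y : connb e x y -> connect e x y.
Proof.
rewrite /connb /reachS; elim: (size els) y => [|n IH] y /=.
- by rewrite inE => /eqP ->.
- rewrite /step mem_undup mem_cat => /orP [/IH //|].
  rewrite mem_filter => /andP [/hasP [u Hu Euy] _].
  exact: connect_trans (IH _ Hu) (connect1 Euy).
Qed.

Lemma reach_self e x : x \in reachS e x.
Proof.
rewrite /reachS; elim: (size els) => [|n IH] /=; first exact: mem_head.
by rewrite /step mem_undup mem_cat IH.
Qed.

Lemma connb_E e x y : closedb e x -> connb e x y = connect e x y.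
Proof.
move=> Hc; apply/idP/idP; first exact: reach_sound.
move/connectP => [p pp ->].
have H : forall a p, a \in reachS e x -> path e a p -> last a p \in reachS e x.
  move=> a q; elim: q a => [|b q IH] a //= Ha /andP [Eab qq]; apply: IH qq.
  move: Hc; rewrite /closedb /closedS => /allP /(_ a (Hfull a)) /implyP /(_ Ha).
  by move=> /allP /(_ b (Hfull b)) /implyP; apply.
exact: H (reach_self e x) pp.
Qed.

Definition goodb : bool :=
  [&& uniq els, all (fun x => closedb E x) els &
      all (fun u => all (fun x => closedb (Eav u) x) els) els].

Hypothesis Hgood : goodb.

Lemma Huniq : uniq els.
Proof. by case/and3P: Hgood. Qed.
Lemma HcE x : closedb E x.
Proof. by case/and3P: Hgood => _ /allP /(_ x (Hfull x)). Qed.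
Lemma HcA u x : closedb (Eav u) x.
Proof. by case/and3P: Hgood => _ _ /allP /(_ u (Hfull u)) /allP /(_ x (Hfull x)). Qed.

Lemma card_count (P : pred V) : #|[set u | P u]| = count P els.
Proof.
rewrite -size_filter.
have /card_uniqP <- : uniq (filter P els) by apply: filter_uniq; exact: Huniq.
by apply: eq_card => u; rewrite inE mem_filter Hfull andbT.
Qed.

Definition leafL (x : V) : bool := all (fun w => ~~ E x w) els.
Definition indegL (v : V) : nat := count (fun u => E u v) els.
Definition outdegL (v : V) : nat := count (fun w => E v w) els.
Definition hybridL (v : V) : bool := 1 < indegL v.
Definition treeL (v : V) : bool := indegL v <= 1.
Definition rootL (r : V) : bool := (indegL r == 0) && all (fun v => connb E r v) els.

Lemma leafL_E x : leafL x = leaf x.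
Proof. by rewrite leafE /leafL allE. Qed.
Lemma hybridL_E v : hybridL v = hybrid v.
Proof. by rewrite /hybrid /indeg card_count. Qed.
Lemma treeL_E v : treeL v = tree_node v.
Proof. by rewrite /tree_node /indeg card_count. Qed.
Lemma outdegL_E v : outdegL v = outdeg v.
Proof. by rewrite /outdeg card_count. Qed.
Lemma rootL_E r : rootL r = is_root r.
Proof.
rewrite /rootL /is_root /indeg card_count allE; congr andb.
by apply: eq_forallb => v; rewrite connb_E // HcE.
Qed.

Definition CbL (u : V) (s : nat) : bool :=
  has (fun x => [&& leafL x, lab x == s & connb E u x]) els.
Lemma CbL_E u s : CbL u s = Cb u s.
Proof. by rewrite /CbL hasE; apply: eq_existsb => x; rewrite leafL_E connb_E // HcE. Qed.
Lemma CsetL u s : Cset u s <-> CbL u s.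
Proof. by rewrite CbL_E; exact: CsetP. Qed.

Definition AbL (u : V) (s : nat) : bool :=
  has (fun x => leafL x && (lab x == s)) els &&
  all (fun r => rootL r ==> all (fun x => (leafL x && (lab x == s)) ==>
     (u == r) || ~~ connb (Eav u) r x) els) els.
Lemma AbL_E u s : AbL u s = Ab u s.
Proof.
rewrite /AbL /Ab hasE allE; congr andb.
  by apply: eq_existsb => x; rewrite leafL_E.
apply: eq_forallb => r; rewrite rootL_E allE; congr implb.
by apply: eq_forallb => x; rewrite leafL_E connb_E // HcA.
Qed.
Lemma AsetL u s : Aset u s <-> AbL u s.
Proof. by rewrite AbL_E; exact: AsetP. Qed.

Definition BbL (u : V) (s : nat) : bool := CbL u s && ~~ AbL u s.
Lemma BsetL u s : Bset u s <-> BbL u s.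
Proof. by rewrite /BbL CbL_E AbL_E; exact: BsetP. Qed.

Definition CcobL (u : V) (s : nat) : bool := (1 <= s <= 5) && ~~ CbL u s.
Lemma CcoL u s : Cco u s <-> CcobL u s.
Proof. by rewrite /CcobL CbL_E; exact: CcoP. Qed.

Definition labOKL : bool := all (fun x => leafL x ==> (1 <= lab x <= 5)) els.
Lemma labOKL_E : labOKL = labOK N.
Proof. by rewrite /labOKL allE; apply: eq_forallb => x; rewrite leafL_E. Qed.

Hypothesis Hl : labOKL.
Lemma Hl' : labOK N. Proof. by rewrite -labOKL_E. Qed.

Lemma CbL_big u s : 5 < s -> CbL u s = false.
Proof. by move=> h; rewrite CbL_E (Cb_big Hl'). Qed.
Lemma AbL_big u s : 5 < s -> AbL u s = false.
Proof. by move=> h; rewrite AbL_E (Ab_big Hl'). Qed.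
Lemma BbL_big u s : 5 < s -> BbL u s = false.
Proof. by move=> h; rewrite /BbL CbL_big. Qed.
Lemma CcobL_big u s : 5 < s -> CcobL u s = false.
Proof. by move=> h; rewrite /CcobL; apply/negbTE; lia. Qed.


(* lazy versions for efficient evaluation *)
Definition rootLz (r : V) : bool :=
  if indegL r == 0 then (let S := reachS E r in all (fun v => v \in S) els) else false.
Definition CbLz (u : V) (s : nat) : bool :=
  has (fun x => if leafL x then (if lab x == s then connb E u x else false) else false) els.
Definition AbLz (u : V) (s : nat) : bool :=
  if has (fun x => leafL x && (lab x == s)) els then
    all (fun r => if rootLz r then all (fun x => if leafL x && (lab x == s) then
       (u == r) || ~~ connb (Eav u) r x else true) els else true) els
  else false.
Definition BbLz (u : V) (s : nat) : bool := if CbLz u s then ~~ AbLz u s else false.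

Lemma CbLz_E u s : CbLz u s = CbL u s. Proof. by []. Qed.
Lemma AbLz_E u s : AbLz u s = AbL u s. Proof. by []. Qed.
Lemma BbLz_E u s : BbLz u s = BbL u s. Proof. by []. Qed.

Definition mxl (P : pred V) (F : V -> nat) : nat :=
  foldr (fun w m => if P w then maxn (F w) m else m) 0 els.

Lemma mxl_ge (P : pred V) F w : P w -> F w <= mxl P F.
Proof.
rewrite /mxl; move: (Hfull w); elim: els => [|a l IH] //=.
rewrite inE => /orP [/eqP <- Pw|Hw Pw]; first by rewrite Pw leq_maxl.
case: (P a); last exact: IH.
by apply: leq_trans (IH Hw Pw) (leq_maxr _ _).
Qed.

Lemma mxl_ex (P : pred V) F m : mxl P F = m.+1 -> exists w, P w /\ F w = m.+1.
Proof.
rewrite /mxl; elim: els => [|a l IH] //=.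
case Pa: (P a); last exact: IH.
case: (leqP (F a) (foldr _ 0 l)) => h; first exact: IH.
by move=> <-; exists a.
Qed.

Fixpoint mhL (f : nat) (v x : V) : nat :=
  let here := if v == x then (hybridL v).+1 else 0 in
  if f is f'.+1 then
    maxn here (mxl (E v) (fun w => if mhL f' w x is k.+1 then (k + hybridL v).+1 else 0))
  else here.

Lemma mhL_complete f : forall v x p, path E v p -> last v p = x -> size p <= f ->
  count (@hybrid N) (v :: p) < mhL f v x.
Proof.
elim: f => [|f IH] v x [|w p] /=.
- by move=> _ <- _; rewrite eqxx addn0 hybridL_E.
- by [].
- by move=> _ <- _; rewrite eqxx addn0 leq_max hybridL_E leqnn.
- move=> /andP [Evw pp] lx sz.
  have := IH w x p pp lx sz.
  rewrite /=. case E2: (mhL f w x) => [//|k] Hk.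
  apply: leq_trans (leq_maxr _ _).
  apply: leq_trans (mxl_ge _ Evw).
  rewrite E2 hybridL_E; move: Hk; lia.
Qed.

Lemma mhL_sound f : forall v x k, mhL f v x = k.+1 ->
  exists p, [/\ path E v p, last v p = x & count (@hybrid N) (v :: p) = k].
Proof.
elim: f => [|f IH] v x k /=.
- by case: eqP => // <- [<-]; exists [::]; rewrite /= addn0 hybridL_E.
- set h := (if v == x then _ else _).
  set B := mxl _ _.
  case: (leqP h B) => hB Hm.
  + have [w [Evw]] := mxl_ex Hm.
    case E2: (mhL f w x) => [|j] // [Hj].
    have [p [pp lp cp]] := IH _ _ _ E2.
    exists (w :: p); split => /=; [by rewrite Evw | done | move: cp Hj => /=; rewrite hybridL_E; lia].
  + move: Hm; rewrite /h; case: eqP => // <- [<-].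
    by exists [::]; rewrite /= addn0 hybridL_E.
Qed.

Definition mhbL (v : V) (s : nat) (n : nat) : bool :=
  has (fun x => [&& leafL x, lab x == s & mhL (size els) v x == n.+1]) els.

Lemma card_le : #|V| <= size els.
Proof.
rewrite cardE; apply: uniq_leq_size; first exact: enum_uniq.
by move=> x _; exact: Hfull.
Qed.

Lemma maxhybL (Hac : acyclic N) v s n : maxhyb v s n <-> mhbL v s n.
Proof.
have sz : forall p, path E v p -> size p <= size els.
  by move=> p pp; apply: leq_trans (path_size' Hac pp) card_le.
split.
- move=> [x [lx ls [p [pp lp cp]] Hall]].
  have := mhL_complete pp lp (sz _ pp).
  case E2: (mhL _ v x) => [//|m] Hlt.
  have [q [qq lq cq]] := mhL_sound E2.
  have := Hall q qq lq; rewrite cq => Hmn.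
  apply/hasP; exists x => //; rewrite leafL_E lx ls eqxx /=; apply/eqP.
  rewrite E2; move: Hlt; rewrite cp; lia.
- move=> /hasP [x _ /and3P [lx /eqP ls /eqP H]].
  have [p [pp lp cp]] := mhL_sound H.
  exists x; split => //; first by rewrite -leafL_E.
    by exists p.
  move=> q qq lq; have := mhL_complete qq lq (sz _ qq).
  by rewrite H.
Qed.

End L.

Section Two.
Variables N1 N2 : net.
Variable els1 : seq (nV N1).
Variable els2 : seq (nV N2).
Hypothesis Hf1 : forall x, x \in els1.
Hypothesis Hf2 : forall x, x \in els2.
Hypothesis Hg1 : goodb els1.
Hypothesis Hg2 : goodb els2.
Hypothesis Hl1 : labOKL els1.
Hypothesis Hl2 : labOKL els2.
Hypothesis Ha1 : acyclic N1.
Hypothesis Ha2 : acyclic N2.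

Definition thetab (v1 : nV N1) (v2 : nV N2) : bool :=
  [&& ssb (AbL els1 v1) (AbL els2 v2), ssb (BbL els1 v1) (BbL els2 v2) &
      ssb (CcobL els1 v1) (CcobL els2 v2)].

Lemma thetab_ok v1 v2 : thetab v1 v2 -> theta_eq v1 v2.
Proof.
move=> /and3P [h1 h2 h3]; split.
- apply: (ss_of (AsetL Hf1 Hg1 v1) (AsetL Hf2 Hg2 v2)) h1 => s hs;
    [exact: AbL_big | exact: AbL_big].
- apply: (ss_of (BsetL Hf1 Hg1 v1) (BsetL Hf2 Hg2 v2)) h2 => s hs;
    [exact: BbL_big | exact: BbL_big].
- apply: (ss_of (CcoL Hf1 Hg1 v1) (CcoL Hf2 Hg2 v2)) h3 => s hs;
    [exact: CcobL_big | exact: CcobL_big].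
Qed.

Definition mhcmp (v1 : nV N1) (v2 : nV N2) (s : nat) : bool :=
  all (fun x1 => (leafL els1 x1 && (lab x1 == s)) ==>
     has (fun x2 => [&& leafL els2 x2, lab x2 == s &
        mhL els1 (size els1) v1 x1 == mhL els2 (size els2) v2 x2]) els2) els1 &&
  all (fun x2 => (leafL els2 x2 && (lab x2 == s)) ==>
     has (fun x1 => [&& leafL els1 x1, lab x1 == s &
        mhL els1 (size els1) v1 x1 == mhL els2 (size els2) v2 x2]) els1) els2.

Definition thABb (v1 : nV N1) (v2 : nV N2) : bool :=
  thetab v1 v2 && all (fun s => (AbL els1 v1 s || BbL els1 v1 s) ==> mhcmp v1 v2 s) (iota 0 6).

Lemma thABb_ok v1 v2 : thABb v1 v2 -> thetaAB_eq v1 v2.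
Proof.
move=> /andP [ht /allP hm]; split; first exact: thetab_ok.
move=> s Hs n.
have Hb : AbL els1 v1 s || BbL els1 v1 s.
  by case: Hs => [/(AsetL Hf1 Hg1)|/(BsetL Hf1 Hg1)] ->; rewrite ?orbT.
have hs : s \in iota 0 6.
  rewrite mem_iota /=; case: (ltnP 5 s) => // h5.
  by move: Hb; rewrite (AbL_big Hf1 Hg1 Hl1 _ h5) (BbL_big Hf1 Hg1 Hl1 _ h5).
move: (hm s hs) => /implyP /(_ Hb) /andP [/allP H1 /allP H2].
rewrite (maxhybL Hf1 Hg1 Hl1 Ha1) (maxhybL Hf2 Hg2 Hl2 Ha2); split.
- move=> /hasP [x1 _ /and3P [lx ls /eqP e]].
  move: (H1 x1 (Hf1 x1)); rewrite lx ls /= => /hasP [x2 _ /and3P [lx2 ls2 /eqP e2]].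
  by apply/hasP; exists x2 => //; rewrite lx2 ls2 -e2 e eqxx.
- move=> /hasP [x2 _ /and3P [lx ls /eqP e]].
  move: (H2 x2 (Hf2 x2)); rewrite lx ls /= => /hasP [x1 _ /and3P [lx1 ls1 /eqP e1]].
  by apply/hasP; exists x1 => //; rewrite lx1 ls1 e1 e eqxx.
Qed.

Definition RSb (v1 : nV N1) (v2 : nV N2) : bool :=
  all (fun u1 => Defs.arc u1 v1 ==> has (fun u2 => Defs.arc u2 v2 && ssb (CbL els1 u1) (CbL els2 u2)) els2) els1 &&
  all (fun u2 => Defs.arc u2 v2 ==> has (fun u1 => Defs.arc u1 v1 && ssb (CbL els1 u1) (CbL els2 u2)) els1) els2.

Lemma ssC (u1 : nV N1) (u2 : nV N2) : ssb (CbL els1 u1) (CbL els2 u2) -> same_set (Cset u1) (Cset u2).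
Proof.
apply: (ss_of (CsetL Hf1 Hg1 u1) (CsetL Hf2 Hg2 u2)) => s hs;
  [exact: CbL_big | exact: CbL_big].
Qed.

Lemma RSb_ok v1 v2 : RSb v1 v2 -> RS_eq v1 v2.
Proof.
move=> /andP [/allP H1 /allP H2]; split.
- move=> u1 a; move/implyP: (H1 u1 (Hf1 u1)) => /(_ a) /hasP [u2 _ /andP [a2 h]].
  by exists u2; split => //; exact: ssC.
- move=> u2 a; move/implyP: (H2 u2 (Hf2 u2)) => /(_ a) /hasP [u1 _ /andP [a1 h]].
  by exists u1; split => //; exact: ssC.
Qed.

Definition Psib (v1 : nV N1) (v2 : nV N2) : bool :=
  [&& treeL els1 v1, treeL els2 v2 & thABb v1 v2] ||
  [&& hybridL els1 v1, hybridL els2 v2, thetab v1 v2 & RSb v1 v2].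

Lemma Psib_ok v1 v2 : Psib v1 v2 -> Psi_eq v1 v2.
Proof.
case/orP => [/and3P [a b c]|/and4P [a b c d]].
- left; split; [by rewrite -(treeL_E Hf1 Hg1) | by rewrite -(treeL_E Hf2 Hg2) | exact: thABb_ok].
- right; split; [by rewrite -(hybridL_E Hf1 Hg1) | by rewrite -(hybridL_E Hf2 Hg2)
   | exact: thetab_ok | exact: RSb_ok].
Qed.

Definition netcheck (b : nV N1 -> nV N2 -> bool) : bool :=
  all (fun u1 => all (fun v1 => Defs.arc u1 v1 ==>
     has (fun u2 => has (fun v2 => Defs.arc u2 v2 && b v1 v2) els2) els2) els1) els1.

Lemma netcheck_ok (R : nV N1 -> nV N2 -> Prop) (b : nV N1 -> nV N2 -> bool) :
  (forall v1 v2, b v1 v2 -> R v1 v2) -> netcheck b ->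
  forall u1 v1 : nV N1, Defs.arc u1 v1 -> exists u2 v2 : nV N2, Defs.arc u2 v2 /\ R v1 v2.
Proof.
move=> Hb /allP H u1 v1 a; move: (H u1 (Hf1 u1)) => /allP /(_ v1 (Hf1 v1)) /implyP /(_ a).
move=> /hasP [u2 _ /hasP [v2 _ /andP [a2 h]]]; exists u2, v2; split => //; exact: Hb.
Qed.

Definition RSNetb : bool :=
  all (fun v1 => hybridL els1 v1 ==> has (fun v2 => hybridL els2 v2 && RSb v1 v2) els2) els1 &&
  all (fun v2 => hybridL els2 v2 ==> has (fun v1 => hybridL els1 v1 && RSb v1 v2) els1) els2.

Lemma RSNet_ok : RSNetb -> RS_net_eq N1 N2.
Proof.
move=> /andP [/allP H1 /allP H2]; split.
- move=> v1 h; rewrite -(hybridL_E Hf1 Hg1) in h.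
  move/implyP: (H1 v1 (Hf1 v1)) => /(_ h) /hasP [v2 _ /andP [h2 r]].
  by exists v2; split; [rewrite -(hybridL_E Hf2 Hg2) | exact: RSb_ok].
- move=> v2 h; rewrite -(hybridL_E Hf2 Hg2) in h.
  move/implyP: (H2 v2 (Hf2 v2)) => /(_ h) /hasP [v1 _ /andP [h1 r]].
  by exists v1; split; [rewrite -(hybridL_E Hf1 Hg1) | exact: RSb_ok].
Qed.

End Two.

Lemma thNet_ok N1 N2 (els1 : seq (nV N1)) (els2 : seq (nV N2))
  (Hf1 : forall x, x \in els1) (Hf2 : forall x, x \in els2)
  (Hg1 : goodb els1) (Hg2 : goodb els2) (Hl1 : labOKL els1) (Hl2 : labOKL els2)
  (Ha1 : acyclic N1) (Ha2 : acyclic N2) :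
  netcheck els1 els2 (thABb els1 els2) -> netcheck els2 els1 (thABb els2 els1) ->
  thetaAB_net_eq N1 N2.
Proof.
move=> h1 h2; split.
- exact: (netcheck_ok Hf1 (thABb_ok Hf1 Hf2 Hg1 Hg2 Hl1 Hl2 Ha1 Ha2)) h1.
- exact: (netcheck_ok Hf2 (thABb_ok Hf2 Hf1 Hg2 Hg1 Hl2 Hl1 Ha2 Ha1)) h2.
Qed.

Lemma PsiNet_ok N1 N2 (els1 : seq (nV N1)) (els2 : seq (nV N2))
  (Hf1 : forall x, x \in els1) (Hf2 : forall x, x \in els2)
  (Hg1 : goodb els1) (Hg2 : goodb els2) (Hl1 : labOKL els1) (Hl2 : labOKL els2)
  (Ha1 : acyclic N1) (Ha2 : acyclic N2) :
  netcheck els1 els2 (Psib els1 els2) -> netcheck els2 els1 (Psib els2 els1) ->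
  Psi_net_eq N1 N2.
Proof.
move=> h1 h2; split.
- exact: (netcheck_ok Hf1 (Psib_ok Hf1 Hf2 Hg1 Hg2 Hl1 Hl2 Ha1 Ha2)) h1.
- exact: (netcheck_ok Hf2 (Psib_ok Hf2 Hf1 Hg2 Hg1 Hl2 Hl1 Ha2 Ha1)) h2.
Qed.

Section TC.
Variable N : net.
Variable els : seq (nV N).
Hypothesis Hf : forall x, x \in els.
Hypothesis Hg : goodb els.
Local Notation E := (@Defs.arc N).

Definition tcbL : bool :=
  [&& all (fun u => all (fun v => E u v ==> ~~ connb els E v u) els) els,
      has (rootL els) els,
      all (fun x => all (fun y => [&& leafL els x, leafL els y & lab x == lab y] ==> (x == y)) els) els,
      labOKL els,
      all (fun s => (0 < s) ==> has (fun x => leafL els x && (lab x == s)) els) (iota 0 6),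
      all (fun v => ~~ leafL els v ==> has (fun w => E v w && treeL els w) els) els,
      all (fun v => treeL els v ==> (outdegL els v != 1)) els &
      all (fun v => hybridL els v ==> (outdegL els v == 1)) els].

Hypothesis Ht : tcbL.

Lemma tcL_acyc : acyclic N.
Proof.
case/and5P: Ht => /allP H _ _ _ _ u v a.
move: (H u (Hf u)) => /allP /(_ v (Hf v)) /implyP /(_ a).
by rewrite connb_E // HcE.
Qed.

Lemma tcL_lab : labOKL els.
Proof. by case/and5P: Ht. Qed.

Lemma tcL_ok : tree_child_network N.
Proof.
case/and5P: Ht => _ /hasP [r _ Hr] /allP Hinj _ /and4P [/allP Hs /allP Htc /allP Hto /allP Hh].
split.
- split; first exact: tcL_acyc.
  by exists r; rewrite -(rootL_E Hf Hg).
- split.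
  + move=> x y lx ly e; move: (Hinj x (Hf x)) => /allP /(_ y (Hf y)) /implyP.
    by rewrite !(leafL_E Hf) lx ly e eqxx => /(_ isT) /eqP.
  + move=> x lx; move/allP: tcL_lab => /(_ x (Hf x)) /implyP.
    by rewrite (leafL_E Hf) => /(_ lx).
  + move=> s /andP [h1 h2].
    have hs : s \in iota 0 6 by rewrite mem_iota; lia.
    move: (Hs s hs) => /implyP /(_ h1) /hasP [x _ /andP [lx /eqP ls]].
    by exists x; rewrite -(leafL_E Hf).
- move=> v lv; rewrite -(leafL_E Hf) in lv.
  move: (Htc v (Hf v)) => /implyP /(_ lv) /hasP [w _ /andP [a t]].
  by exists w; rewrite -(treeL_E Hf Hg).
- move=> v tv; rewrite -(treeL_E Hf Hg) in tv.
  by move: (Hto v (Hf v)) => /implyP /(_ tv); rewrite (outdegL_E Hf Hg).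
- move=> v hv; rewrite -(hybridL_E Hf Hg) in hv.
  by move: (Hh v (Hf v)) => /implyP /(_ hv); rewrite (outdegL_E Hf Hg) => /eqP.
Qed.

Definition propL2 : bool :=
  has (fun r => has (fun a => has (fun h => has (fun x =>
    all (fun w => ~~ E w r) els && (E r a && (E a h &&
    (E h x && (leafL els x && (lab x == 2)))))) els) els) els) els.

End TC.

Lemma noniso N1 N2 (els1 : seq (nV N1)) (els2 : seq (nV N2))
  (Hf1 : forall x, x \in els1) (Hf2 : forall x, x \in els2)
  (Hg1 : goodb els1) (Hg2 : goodb els2) :
  propL2 els1 -> ~~ propL2 els2 -> ~ isomorphic N1 N2.
Proof.
move=> /hasP [r _ /hasP [a _ /hasP [h _ /hasP [x _ H]]]] Hn [f [[g fg gf] Harc Hlab]].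
move/andP: H => [/allP Hr /andP [ra /andP [ah /andP [hx /andP [lx lb]]]]].
rewrite (leafL_E Hf1) in lx.
move/negP: Hn; apply; apply/hasP; exists (f r) => //; apply/hasP; exists (f a) => //.
apply/hasP; exists (f h) => //; apply/hasP; exists (f x) => //.
rewrite !Harc ra ah hx /= (leafL_E Hf2) Hlab // lb andbT; apply/andP; split.
- by apply/allP => w _; rewrite -[w]gf Harc Hr.
- rewrite leafE; apply/forallP => w; rewrite -[w]gf Harc.
  by move: lx; rewrite leafE => /forallP.
Qed.

Definition I6 := iota 0 6.
Definition summT := (seq bool * seq bool * seq bool * seq bool * seq (seq nat) * bool * bool)%type.
Definition sA (x : summT) := x.1.1.1.1.1.1.
Definition sB (x : summT) := x.1.1.1.1.1.2.
Definition sCo (x : summT) := x.1.1.1.1.2.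
Definition sC (x : summT) := x.1.1.1.2.
Definition sM (x : summT) := x.1.1.2.
Definition sH (x : summT) := x.1.2.
Definition sT (x : summT) := x.2.

Section S.
Variable N : net.
Variable els : seq (nV N).
Definition mhlist (v : nV N) (s : nat) : seq nat :=
  [seq mhL els (size els) v x | x <- els & leafL els x && (lab x == s)].
Definition summ (v : nV N) : summT :=
  (map (AbLz els v) I6, map (BbLz els v) I6, map (CcobL els v) I6, map (CbLz els v) I6,
   map (mhlist v) I6, hybridL els v, treeL els v).
Definition look (T : seq summT) (v : nV N) : summT :=
  nth (nil, nil, nil, nil, nil, false, false) T (index v els).
Hypothesis Hf : forall x, x \in els.
Lemma look_E v : look (map summ els) v = summ v.
Proof. by rewrite /look (nth_map v) ?index_mem ?Hf // nth_index. Qed.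
End S.

Lemma map_ssb (p q : nat -> bool) : map p I6 = map q I6 -> ssb p q.
Proof. by move/eq_in_map => H; apply/allP => s hs; rewrite H. Qed.

Definition thetaS (x y : summT) : bool :=
  [&& sA x == sA y, sB x == sB y & sCo x == sCo y].
Definition thABS (x y : summT) : bool := thetaS x y && (sM x == sM y).

Section Two.
Variables N1 N2 : net.
Variable els1 : seq (nV N1).
Variable els2 : seq (nV N2).
Hypothesis Hf1 : forall x, x \in els1.
Hypothesis Hf2 : forall x, x \in els2.
Hypothesis Hg1 : goodb els1.
Hypothesis Hg2 : goodb els2.
Hypothesis Hl1 : labOKL els1.
Hypothesis Hl2 : labOKL els2.
Hypothesis Ha1 : acyclic N1.
Hypothesis Ha2 : acyclic N2.

Lemma thetaS_ok v1 v2 : thetaS (summ els1 v1) (summ els2 v2) -> thetab els1 els2 v1 v2.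
Proof.
move=> /and3P [/eqP h1 /eqP h2 /eqP h3]; apply/and3P; split; apply: map_ssb.
- by rewrite -!(eq_map (AbLz_E _ _)).
- by rewrite -!(eq_map (BbLz_E _ _)).
- exact: h3.
Qed.

Lemma thABS_ok v1 v2 : thABS (summ els1 v1) (summ els2 v2) -> thABb els1 els2 v1 v2.
Proof.
move=> /andP [ht /eqP hm]; apply/andP; split; first exact: thetaS_ok.
apply/allP => s hs; apply/implyP => _.
move/eq_in_map: hm => /(_ s hs) hm.
apply/andP; split; apply/allP.
- move=> x1 _; apply/implyP => P1.
  have : mhL els1 (size els1) v1 x1 \in mhlist els2 v2 s.
    by rewrite -hm /mhlist; apply/mapP; exists x1 => //; rewrite mem_filter P1 Hf1.
  case/mapP => x2; rewrite mem_filter => /andP [/andP [lx2 ls2] _] e.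
  by apply/hasP; exists x2 => //; rewrite lx2 ls2 e eqxx.
- move=> x2 _; apply/implyP => P2.
  have : mhL els2 (size els2) v2 x2 \in mhlist els1 v1 s.
    by rewrite hm /mhlist; apply/mapP; exists x2 => //; rewrite mem_filter P2 Hf2.
  case/mapP => x1; rewrite mem_filter => /andP [/andP [lx1 ls1] _] e.
  by apply/hasP; exists x1 => //; rewrite lx1 ls1 e eqxx.
Qed.

Variables (T1 : seq summT) (T2 : seq summT).
Hypothesis HT1 : T1 = map (summ els1) els1.
Hypothesis HT2 : T2 = map (summ els2) els2.

Definition RST (v1 : nV N1) (v2 : nV N2) : bool :=
  all (fun u1 => if Defs.arc u1 v1 then has (fun u2 => if Defs.arc u2 v2 then
        sC (look els1 T1 u1) == sC (look els2 T2 u2) else false) els2 else true) els1 &&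
  all (fun u2 => if Defs.arc u2 v2 then has (fun u1 => if Defs.arc u1 v1 then
        sC (look els1 T1 u1) == sC (look els2 T2 u2) else false) els1 else true) els2.

Lemma sC_ok u1 u2 : sC (look els1 T1 u1) == sC (look els2 T2 u2) -> ssb (CbL els1 u1) (CbL els2 u2).
Proof.
by rewrite HT1 HT2 !look_E // => /eqP h; apply: map_ssb.
Qed.

Lemma RST_ok v1 v2 : RST v1 v2 -> RSb els1 els2 v1 v2.
Proof.
move=> /andP [/allP H1 /allP H2]; apply/andP; split; apply/allP.
- move=> u1 hu; apply/implyP => a; move: (H1 u1 hu); rewrite a => /hasP [u2 h2].
  case a2: (Defs.arc u2 v2) => // hc; apply/hasP; exists u2 => //.
  by rewrite a2; exact: sC_ok.
- move=> u2 hu; apply/implyP => a; move: (H2 u2 hu); rewrite a => /hasP [u1 h1].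
  case a1: (Defs.arc u1 v1) => // hc; apply/hasP; exists u1 => //.
  by rewrite a1; exact: sC_ok.
Qed.

Definition netT (cmp : nV N1 -> nV N2 -> bool) : bool :=
  all (fun u1 => all (fun v1 => if Defs.arc u1 v1 then
     has (fun u2 => has (fun v2 => if Defs.arc u2 v2 then cmp v1 v2 else false) els2) els2
     else true) els1) els1.

Lemma netT_ok (cmp : nV N1 -> nV N2 -> bool) (b : nV N1 -> nV N2 -> bool) :
  (forall v1 v2, cmp v1 v2 -> b v1 v2) -> netT cmp -> netcheck els1 els2 b.
Proof.
move=> Hc /allP H; apply/allP => u1 h1; apply/allP => v1 h1'; apply/implyP => a.
move: (H u1 h1) => /allP /(_ v1 h1'); rewrite a => /hasP [u2 hu2 /hasP [v2 hv2]].
case a2: (Defs.arc u2 v2) => // hc.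
by apply/hasP; exists u2 => //; apply/hasP; exists v2 => //; rewrite a2 Hc.
Qed.

Definition thCmp (v1 : nV N1) (v2 : nV N2) : bool := thABS (look els1 T1 v1) (look els2 T2 v2).

Lemma thCmp_ok v1 v2 : thCmp v1 v2 -> thABb els1 els2 v1 v2.
Proof. by rewrite /thCmp HT1 HT2 !look_E //; exact: thABS_ok. Qed.

Definition psiCmp (v1 : nV N1) (v2 : nV N2) : bool :=
  let x := look els1 T1 v1 in let y := look els2 T2 v2 in
  if sT x && sT y then thABS x y else
  if sH x && sH y then thetaS x y && RST v1 v2 else false.

Lemma psiCmp_ok v1 v2 : psiCmp v1 v2 -> Psib els1 els2 v1 v2.
Proof.
rewrite /psiCmp /Psib HT1 HT2 !look_E // /summ /sT /sH /=.
case: (treeL els1 v1 && treeL els2 v2) /andP => [[t1 t2] h|_].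
  by rewrite t1 t2 /= thABS_ok.
case: (hybridL els1 v1 && hybridL els2 v2) /andP => [[h1 h2] /andP [ht hr]|_] //.
by rewrite h1 h2 /= thetaS_ok //= RST_ok // orbT.
Qed.

Definition hybCmp (v1 : nV N1) (v2 : nV N2) : bool :=
  if sH (look els1 T1 v1) then (if sH (look els2 T2 v2) then RST v1 v2 else false) else false.

Definition RSNetT : bool :=
  all (fun v1 => if hybridL els1 v1 then has (fun v2 => hybCmp v1 v2) els2 else true) els1 &&
  all (fun v2 => if hybridL els2 v2 then has (fun v1 => hybCmp v1 v2) els1 else true) els2.

Lemma hybCmp_ok v1 v2 : hybCmp v1 v2 -> hybridL els1 v1 && hybridL els2 v2 && RSb els1 els2 v1 v2.
Proof.
rewrite /hybCmp HT1 HT2 !look_E // /summ /sH /=.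
by case: (hybridL els1 v1); case: (hybridL els2 v2) => //= /RST_ok.
Qed.

Lemma RSNetT_ok : RSNetT -> RSNetb els1 els2.
Proof.
move=> /andP [/allP H1 /allP H2]; apply/andP; split; apply/allP.
- move=> v1 h; apply/implyP => hy; move: (H1 v1 h); rewrite hy => /hasP [v2 h2 c].
  apply/hasP; exists v2 => //; case/andP: (hybCmp_ok c) => /andP [_ ->] ->; done.
- move=> v2 h; apply/implyP => hy; move: (H2 v2 h); rewrite hy => /hasP [v1 h1 c].
  apply/hasP; exists v1 => //; case/andP: (hybCmp_ok c) => /andP [-> _] ->; done.
Qed.

End Two.

Definition elts : seq 'I_15 :=
  [:: @Ordinal 15 0 isT; @Ordinal 15 1 isT; @Ordinal 15 2 isT; @Ordinal 15 3 isT;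
      @Ordinal 15 4 isT; @Ordinal 15 5 isT; @Ordinal 15 6 isT; @Ordinal 15 7 isT;
      @Ordinal 15 8 isT; @Ordinal 15 9 isT; @Ordinal 15 10 isT; @Ordinal 15 11 isT;
      @Ordinal 15 12 isT; @Ordinal 15 13 isT; @Ordinal 15 14 isT].

Lemma elts_full : forall x : 'I_15, x \in elts.
Proof.
move=> [m Hm]; do 15! (case: m Hm => [|m] Hm; first by []).
by [].
Qed.
Definition adjA : seq (seq bool) :=
[::
  [:: false; false; false; false; false; false; false; false; false; false; false; false; false; false; false];
  [:: false; false; false; false; false; false; false; false; false; false; false; false; false; false; false];
  [:: false; false; false; false; false; false; false; false; false; false; false; false; false; false; false];
  [:: false; false; false; false; false; false; false; false; false; false; false; false; false; false; false];
  [:: false; false; false; false; false; false; false; false; false; false; false; false; false; false; false];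
  [:: false; false; false; false; true; false; false; false; false; false; true; false; false; false; false];
  [:: false; false; false; false; false; false; false; false; false; true; false; false; false; false; true];
  [:: false; false; false; false; false; false; false; false; false; false; false; false; true; true; false];
  [:: false; false; false; false; false; true; false; true; false; false; false; false; false; false; false];
  [:: false; false; false; true; false; false; false; false; false; false; true; false; false; false; false];
  [:: false; false; false; false; false; false; false; false; false; false; false; true; false; false; false];
  [:: true; false; false; false; false; false; false; false; false; false; false; false; true; false; false];
  [:: false; true; false; false; false; false; false; false; false; false; false; false; false; false; false];
  [:: false; false; false; false; false; false; true; false; false; false; false; false; false; false; true];
  [:: false; false; true; false; false; false; false; false; false; false; false; false; false; false; false]].
Definition adjB : seq (seq bool) :=
[::
  [:: false; false; false; false; false; false; false; false; false; false; false; false; false; false; false];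
  [:: false; false; false; false; false; false; false; false; false; false; false; false; false; false; false];
  [:: false; false; false; false; false; false; false; false; false; false; false; false; false; false; false];
  [:: false; false; false; false; false; false; false; false; false; false; false; false; false; false; false];
  [:: false; false; false; false; false; false; false; false; false; false; false; false; false; false; false];
  [:: true; false; false; false; false; false; false; false; false; false; true; false; false; false; false];
  [:: false; false; false; false; true; false; false; false; false; false; false; false; true; false; false];
  [:: false; false; false; false; false; false; false; false; false; true; false; false; false; false; true];
  [:: false; false; false; false; false; false; true; true; false; false; false; false; false; false; false];
  [:: false; false; false; false; false; false; false; false; false; false; true; false; false; true; false];
  [:: false; true; false; false; false; false; false; false; false; false; false; false; false; false; false];
  [:: false; false; false; true; false; false; false; false; false; false; false; false; true; false; false];
  [:: false; false; false; false; false; true; false; false; false; false; false; false; false; false; false];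
  [:: false; false; false; false; false; false; false; false; false; false; false; true; false; false; true];
  [:: false; false; true; false; false; false; false; false; false; false; false; false; false; false; false]].

Definition labf (v : 'I_15) : nat := if (v : nat) < 5 then v.+1 else 0.

Definition NA : net := @Net 'I_15 (fun u v : 'I_15 => nth false (nth [::] adjA u) v) labf.
Definition NB : net := @Net 'I_15 (fun u v : 'I_15 => nth false (nth [::] adjB u) v) labf.

Definition elA : seq (nV NA) := elts.
Definition elB : seq (nV NB) := elts.

Definition allcheck (T1 T2 : seq summT) : bool :=
  [&& netT elA elB (thCmp elA elB T1 T2), netT elB elA (thCmp elB elA T2 T1),
      netT elA elB (psiCmp elA elB T1 T2), netT elB elA (psiCmp elB elA T2 T1) &
      RSNetT elA elB T1 T2].

Lemma gA : goodb elA. Proof. vm_compute; reflexivity. Qed.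
Lemma gB : goodb elB. Proof. vm_compute; reflexivity. Qed.
Lemma tcA : tcbL elA. Proof. vm_compute; reflexivity. Qed.
Lemma tcB : tcbL elB. Proof. vm_compute; reflexivity. Qed.
Lemma chk : allcheck (map (summ elA) elA) (map (summ elB) elB).
Proof. vm_compute; reflexivity. Qed.

Lemma pA : propL2 elA. Proof. vm_compute; reflexivity. Qed.
Lemma pB : ~~ propL2 elB. Proof. vm_compute; reflexivity. Qed.

Theorem mainTheorem5 :
  exists N11 N12 : net,
    [/\ tree_child_network N11 /\ tree_child_network N12,
        ~ isomorphic N11 N12,
        thetaAB_net_eq N11 N12,
        Psi_net_eq N11 N12 &
        RS_net_eq N11 N12].
Proof.
have fA : forall x : nV NA, x \in elA := elts_full.
have fB : forall x : nV NB, x \in elB := elts_full.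
have lA := tcL_lab tcA. have lB := tcL_lab tcB.
have aA := tcL_acyc fA gA tcA. have aB := tcL_acyc fB gB tcB.
have := chk; rewrite /allcheck => /and5P [c1 c2 c3 c4 c5].
exists NA, NB; split.
- by split; [exact: (tcL_ok fA gA tcA) | exact: (tcL_ok fB gB tcB)].
- exact: (noniso fA fB gA gB pA pB).
- apply: (thNet_ok fA fB gA gB lA lB aA aB).
  + exact: (netT_ok (thCmp_ok fA fB erefl erefl) c1).
  + exact: (netT_ok (thCmp_ok fB fA erefl erefl) c2).
- apply: (PsiNet_ok fA fB gA gB lA lB aA aB).
  + exact: (netT_ok (psiCmp_ok fA fB erefl erefl) c3).
  + exact: (netT_ok (psiCmp_ok fB fA erefl erefl) c4).
- apply: (RSNet_ok fA fB gA gB lA lB).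
  exact: (RSNetT_ok fA fB erefl erefl c5).
Qed.
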